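(* Let $\tau_n:=\max\{k\ge1:U_{n-k}=k\}$ (the number of red balls in the urn right after the last black ball has been removed). Then $\tau_n$ has the same distribution as $\tau_n':=\max\{k\ge1:U_k=k\}$, and for $k\ge1$ \[ \mathbf P(\tau_n\ge k)=\frac{(n-k)(n-k-1)\cdots(n-2k+1)}{(n-1)(n-2)\cdots(n-k)}. \] Consequently, for every $t\ge0$, $\mathbf P(\tau_n/\sqrt n\ge t)\to e^{-t^2}$ as $n\to\infty$.
   Context: Urn process: let $n\ge2$. An urn initially contains $n$ black balls. It is emptied in $n$ steps: in each of the first $n-1$ steps a uniformly random pair of balls is removed from the urn and replaced by one red ball; in step $n$ the last remaining ball is removed. $U_k$ is the number of red balls in the urn after $k$ steps, $0\le k\le n$. *)

(* Defs.v *)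
From Stdlib Require Import Reals Lra Lia ZArith Arith List.
Import ListNotations.
Open Scope R_scope.

Definition choose2 (x : nat) : R := INR (x * (x - 1)) / 2.

(* One pairing step of the urn, from an urn with m balls of which r are red
   (hence b = m - r black).  A uniformly random pair is removed and replaced by
   one red ball.  Result: list of (new number of red balls, probability).
     two black  : r -> r+1, prob C(b,2)/C(m,2)
     black+red  : r -> r,   prob b*r /C(m,2)
     two red    : r -> r-1, prob C(r,2)/C(m,2)                                *)
Definition trans (m r : nat) : list (nat * R) :=
  let b := (m - r)%nat in
  [ (S r, choose2 b / choose2 m);
    (r, INR (b * r) / choose2 m);
    (Nat.pred r, choose2 r / choose2 m) ].

(* Expectation of f over the random continuation of the red-ball count,
   running j more pairing steps from an urn with m balls, r of them red.
   f receives the list of successive red-ball counts after each step. *)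
Fixpoint pathE (j m r : nat) (f : list nat -> R) {struct j} : R :=
  match j with
  | O => f nil
  | S j' =>
      fold_right Rplus 0
        (map (fun q : nat * R =>
                snd q * pathE j' (m - 1) (fst q) (fun s => f (fst q :: s)))
             (trans m r))
  end.

(* Expectation of a functional of the whole trajectory
   U = [U_0; U_1; ...; U_n] of the urn process started with n black balls:
   U_0 = 0, steps 1..n-1 are pairing steps, and at step n the last ball is
   removed so U_n = 0. *)
Definition urnE (n : nat) (f : list nat -> R) : R :=
  pathE (n - 1) n 0 (fun s => f (0%nat :: s ++ [0%nat])).

Definition urnP (n : nat) (A : list nat -> bool) : R :=
  urnE n (fun U => if A U then 1 else 0).

Definition U_at (U : list nat) (k : nat) : nat := nth k U 0%nat.

(* tau_n = max{k >= 1 : U_{n-k} = k}  (k ranges over 1..n; 0 if no such k,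
   which never happens for n >= 2 since U_{n-1} = 1). *)
Definition tau (n : nat) (U : list nat) : nat :=
  fold_left (fun acc k => if Nat.eqb (U_at U (n - k)) k then k else acc)
            (seq 1 n) 0%nat.

Definition tau' (n : nat) (U : list nat) : nat :=
  fold_left (fun acc k => if Nat.eqb (U_at U k) k then k else acc)
            (seq 1 n) 0%nat.

(* prod_{i=0}^{k-1} (n-k-i)/(n-1-i)
   = (n-k)(n-k-1)...(n-2k+1) / ((n-1)(n-2)...(n-k)), with integer factors. *)
Definition tau_tail (n k : nat) : R :=
  fold_right Rmult 1
    (map (fun i => IZR (Z.of_nat n - Z.of_nat k - Z.of_nat i)%Z
                   / IZR (Z.of_nat n - 1 - Z.of_nat i)%Z)
         (seq 0 k)).

(* Main.v *)
Require Import Defs.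
From Stdlib Require Import Reals Lra Lia ZArith Arith List.
Import ListNotations.
Open Scope R_scope.

Definition wBB (m r : nat) : R := choose2 (m - r) / choose2 m.
Definition wBR (m r : nat) : R := INR ((m - r) * r) / choose2 m.
Definition wRR (m r : nat) : R := choose2 r / choose2 m.

Lemma pathE_S : forall j m r f,
  pathE (S j) m r f =
  wBB m r * pathE j (m-1) (S r) (fun s => f (S r :: s)) +
  (wBR m r * pathE j (m-1) r (fun s => f (r :: s)) +
  (wRR m r * pathE j (m-1) (pred r) (fun s => f (pred r :: s)) + 0)).
Proof. reflexivity. Qed.

Lemma choose2_eq : forall x, choose2 x = INR x * (INR x - 1) / 2.
Proof.
  intros x; unfold choose2. destruct x.
  - simpl. lra.
  - rewrite mult_INR. replace (S x - 1)%nat with x by lia.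
    rewrite S_INR. f_equal. ring.
Qed.

Lemma choose2_pos : forall x, (2 <= x)%nat -> 0 < choose2 x.
Proof.
  intros x H. rewrite choose2_eq.
  assert (2 <= INR x) by (apply (le_INR 2); lia). nra.
Qed.

Lemma choose2_small : forall x, (x <= 1)%nat -> choose2 x = 0.
Proof. intros x H. destruct x as [|[|]]; try lia; unfold choose2; simpl; lra. Qed.

Lemma branch : forall w A B : R, (w <> 0 -> A = B) -> w * A = w * B.
Proof.
  intros w A B H. destruct (Req_dec w 0) as [->|Hw]; [ring|rewrite H; auto].
Qed.

Lemma wBB_nz : forall m r, wBB m r <> 0 -> (S r <= m - 1 /\ 2 <= m)%nat.
Proof.
  intros m r H. unfold wBB in H.
  destruct (le_lt_dec 2 (m - r)) as [h|h].
  - lia.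
  - rewrite choose2_small in H by lia. exfalso; apply H; unfold Rdiv; ring.
Qed.

Lemma wBR_nz : forall m r, wBR m r <> 0 -> (r <= m - 1 /\ 1 <= r /\ 2 <= m)%nat.
Proof.
  intros m r H. unfold wBR in H.
  destruct (le_lt_dec 2 m) as [h2|h2].
  2:{ rewrite (choose2_small m) in H by lia. exfalso; apply H; unfold Rdiv; rewrite Rinv_0; ring. }
  destruct (Nat.eq_dec ((m - r) * r) 0) as [h|h].
  - rewrite h in H. exfalso; apply H; simpl; unfold Rdiv; ring.
  - assert (m - r <> 0)%nat by (intro e; rewrite e in h; lia).
    assert (r <> 0)%nat by (intro e; rewrite e in h; lia). lia.
Qed.

Lemma wRR_nz : forall m r, wRR m r <> 0 -> (2 <= r /\ 2 <= m)%nat.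
Proof.
  intros m r H. unfold wRR in H.
  destruct (le_lt_dec 2 m) as [h2|h2].
  2:{ rewrite (choose2_small m) in H by lia. exfalso; apply H; unfold Rdiv; rewrite Rinv_0; ring. }
  destruct (le_lt_dec 2 r) as [h|h]; [lia|].
  rewrite choose2_small in H by lia. exfalso; apply H; unfold Rdiv; ring.
Qed.

Lemma wsum : forall m r, (r <= m)%nat -> (2 <= m)%nat -> wBB m r + (wBR m r + (wRR m r + 0)) = 1.
Proof.
  intros m r H1 H2. unfold wBB, wBR, wRR.
  assert (Hc : 2 <= INR m) by (apply (le_INR 2); lia).
  rewrite !choose2_eq in *. rewrite mult_INR, minus_INR by lia.
  field. nra.
Qed.

Fixpoint adm (m r : nat) (s : list nat) : Prop :=
  match s with
  | nil => True
  | x :: s' => ((x = S r /\ wBB m r <> 0) \/ (x = r /\ wBR m r <> 0) \/ (x = pred r /\ wRR m r <> 0))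
               /\ adm (m - 1) x s'
  end.

Lemma pathE_ext : forall j m r f g,
  (forall s, length s = j -> adm m r s -> f s = g s) -> pathE j m r f = pathE j m r g.
Proof.
  induction j; intros m r f g H.
  - simpl. apply H; simpl; auto.
  - rewrite !pathE_S. f_equal; [|f_equal; [|f_equal]];
    apply branch; intro Hw; apply IHj; intros s Hl Ha; apply H; simpl; auto.
Qed.

Lemma pathE_const : forall j m r c, (r <= m)%nat -> (j < m)%nat -> pathE j m r (fun _ => c) = c.
Proof.
  induction j; intros m r c H1 H2.
  - reflexivity.
  - rewrite pathE_S.
    transitivity ((wBB m r + (wBR m r + (wRR m r + 0))) * c).
    2:{ rewrite wsum by lia. ring. }
    rewrite !Rmult_plus_distr_r. f_equal; [|f_equal; [|f_equal]].
    + apply branch; intro Hw; apply wBB_nz in Hw. apply IHj; lia.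
    + apply branch; intro Hw; apply wBR_nz in Hw. apply IHj; lia.
    + apply branch; intro Hw; apply wRR_nz in Hw. apply IHj; lia.
    + ring.
Qed.

Lemma pathE_minus : forall j m r f g,
  pathE j m r (fun s => f s - g s) = pathE j m r f - pathE j m r g.
Proof.
  induction j; intros m r f g.
  - reflexivity.
  - rewrite !pathE_S. rewrite !IHj. ring.
Qed.

Fixpoint Vs (t m r : nat) (G : nat -> R) {struct t} : R :=
  match t with
  | O => G r
  | S t' => wBB m r * Vs t' (m-1) (S r) G + (wBR m r * Vs t' (m-1) r G +
            (wRR m r * Vs t' (m-1) (pred r) G + 0))
  end.

Lemma pathE_Vs : forall i j m r G d, (i <= j)%nat -> (r <= m)%nat -> (j < m)%nat ->
  pathE j m r (fun s => G (nth i (r :: s) d)) = Vs i m r G.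
Proof.
  induction i; intros j m r G d H1 H2 H3.
  - simpl. apply pathE_const; auto.
  - destruct j; [lia|]. rewrite pathE_S. simpl Vs.
    f_equal; [|f_equal; [|f_equal]].
    + apply branch; intro Hw; apply wBB_nz in Hw. apply (IHi j (m-1)%nat (S r) G d); lia.
    + apply branch; intro Hw; apply wBR_nz in Hw. apply (IHi j (m-1)%nat r G d); lia.
    + apply branch; intro Hw; apply wRR_nz in Hw. apply (IHi j (m-1)%nat (pred r) G d); lia.
Qed.
Definition ind (y x : nat) : R := if Nat.eqb x y then 1 else 0.

Lemma Vs_ind_zero : forall t m r y, (r + t < y)%nat -> Vs t m r (ind y) = 0.
Proof.
  induction t; intros m r y H.
  - simpl. unfold ind. destruct (Nat.eqb_spec r y); [lia|auto].
  - simpl. rewrite !IHt by lia. ring.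
Qed.

Fixpoint Qp (t m r : nat) : R :=
  match t with O => 1 | S t' => wBB m r * Qp t' (m-1) (S r) end.

Lemma Vs_ind_top : forall t m r, Vs t m r (ind (r + t)) = Qp t m r.
Proof.
  induction t; intros m r.
  - simpl. unfold ind. rewrite Nat.add_0_r, Nat.eqb_refl. auto.
  - simpl. replace (r + S t)%nat with (S r + t)%nat by lia. rewrite IHt.
    rewrite !Vs_ind_zero by lia. ring.
Qed.

Definition step (m x : nat) (G : nat -> R) : R :=
  wBB m x * G (S x) + (wBR m x * G x + (wRR m x * G (pred x) + 0)).

Lemma Vs_last : forall t m r G, Vs (S t) m r G = Vs t m r (fun x => step (m - t) x G).
Proof.
  induction t; intros m r G.
  - simpl. unfold step. rewrite Nat.sub_0_r. ring.
  - change (Vs (S (S t)) m r G) with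
     (wBB m r * Vs (S t) (m-1) (S r) G + (wBR m r * Vs (S t) (m-1) r G +
            (wRR m r * Vs (S t) (m-1) (pred r) G + 0))).
    rewrite !(IHt (m-1)%nat). replace (m - 1 - t)%nat with (m - S t)%nat by lia. reflexivity.
Qed.
Open Scope nat_scope.

Fixpoint B (n k : nat) : nat :=
  match n, k with
  | _, O => 1
  | O, S _ => 0
  | S n', S k' => B n' k' + B n' k
  end.

Lemma B_gt : forall n k, n < k -> B n k = 0.
Proof.
  induction n; intros k H; destruct k; simpl; try lia; auto.
  rewrite !IHn by lia. auto.
Qed.

Lemma B_0 : forall n, B n 0 = 1.
Proof. destruct n; reflexivity. Qed.

Lemma B_abs : forall n k, B (S n) (S k) * S k = S n * B n k.
Proof.
  induction n; intros k.
  - destruct k; simpl; try lia.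
  - destruct k.
    + change (B (S (S n)) 1) with (B (S n) 0 + B (S n) 1).
      pose proof (IHn 0). rewrite B_0 in *. lia.
    + change (B (S (S n)) (S (S k))) with (B (S n) (S k) + B (S n) (S (S k))).
      change (B (S n) (S k)) with (B n k + B n (S k)).
      pose proof (IHn (S k)) as H1. pose proof (IHn k) as H2.
      change (B (S n) (S k)) with (B n k + B n (S k)) in H2.
      nia.
Qed.

Lemma B_abs2 : forall n k, B n (S k) * S k = B n k * (n - k).
Proof.
  intros n k. destruct (le_lt_dec k n).
  - pose proof (B_abs n k) as H. change (B (S n) (S k)) with (B n k + B n (S k)) in H.
    replace (n - k) with (S n - S k) by lia. nia.
  - rewrite !B_gt by lia. lia.
Qed.

Lemma B_abs3 : forall m z, S m * B m (S z) = (m - z) * B (S m) (S z).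
Proof.
  intros m z. pose proof (B_abs m z). pose proof (B_abs2 m z).
  apply (Nat.mul_cancel_r _ _ (S z)); [lia|]. nia.
Qed.

Lemma B_fact : forall n k, k <= n -> B n k * fact k * fact (n - k) = fact n.
Proof.
  induction n; intros k H.
  - destruct k; [reflexivity|lia].
  - destruct k.
    + rewrite B_0. simpl (fact 0). rewrite Nat.sub_0_r. lia.
    + pose proof (B_abs n k) as Hab. specialize (IHn k ltac:(lia)).
      replace (S n - S k) with (n - k) by lia.
      change (fact (S k)) with (S k * fact k). change (fact (S n)) with (S n * fact n).
      rewrite <- IHn.
      replace (B (S n) (S k) * (S k * fact k) * fact (n - k)) with
        ((B (S n) (S k) * S k) * fact k * fact (n - k)) by ring.
      rewrite Hab. ring.
Qed.

Lemma B_nn : forall n, B n n = 1.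
Proof.
  intro n. pose proof (B_fact n n (le_n _)). rewrite Nat.sub_diag in H. simpl in H.
  pose proof (lt_O_fact n). nia.
Qed.

Definition Bs (t x : nat) : nat := match x with O => 0 | S x' => B t x' end.

Lemma B_pascal2 : forall t z, Bs t z + 2 * B t z + B t (S z) = B (S (S t)) (S z).
Proof.
  intros t z. change (B (S (S t)) (S z)) with (B (S t) z + B (S t) (S z)).
  change (B (S t) (S z)) with (B t z + B t (S z)).
  destruct z; simpl Bs.
  - rewrite !B_0. lia.
  - change (B (S t) (S z)) with (B t z + B t (S z)). lia.
Qed.

Fixpoint ff (a k : nat) : nat := match k with O => 1 | S k' => ff a k' * (a - k') end.

Lemma ff_fact : forall a k, k <= a -> ff a k * fact (a - k) = fact a.
Proof.
  induction k; intros H.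
  - simpl. rewrite Nat.sub_0_r. lia.
  - simpl ff. replace (a - k) with (S (a - S k)) by lia.
    specialize (IHk ltac:(lia)). replace (a - k) with (S (a - S k)) in IHk by lia.
    change (fact (S (a - S k))) with (S (a - S k) * fact (a - S k)) in IHk. nia.
Qed.

Lemma ff_S' : forall a k, ff a (S k) = a * ff (a - 1) k.
Proof.
  intros a k. induction k.
  - simpl. lia.
  - change (ff a (S (S k))) with (ff a (S k) * (a - S k)). rewrite IHk. simpl.
    replace (a - 1 - k) with (a - S k) by lia. lia.
Qed.

Lemma Nid : forall m t' z, 2 <= m ->
  B m z * Bs t' z * ((m - z) * (m - z - 1)) + 2 * (B m (S z) * B t' z * ((m - S z) * S z))
  + B m (S (S z)) * B t' (S z) * (S (S z) * (S (S z) - 1))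
  = B (m-1) (S z) * B (S t') z * (m * S (S t')).
Proof.
  intros m t' z Hm.
  destruct m as [|m1]; [lia|].
  replace (S m1 - 1) with m1 by lia.
  pose proof (B_abs3 m1 z) as H1. change (m1 - z) with (S m1 - S z) in H1.
  pose proof (B_abs (S t') z) as H2.
  rewrite <- B_pascal2 in H2.
  pose proof (B_abs2 (S m1) z) as H3.
  pose proof (B_abs2 (S m1) (S z)) as H4.
  replace (S (S z) - 1) with (S z) by lia.
  replace (S m1 - z - 1) with (S m1 - S z) by lia.
  set (X := B (S m1) (S z) * (S m1 - S z) * S z).
  assert (T1 : B (S m1) z * ((S m1 - z) * (S m1 - S z)) = X).
  { unfold X. rewrite Nat.mul_assoc, <- H3. ring. }
  assert (T3 : B (S m1) (S (S z)) * (S (S z) * S z) = X).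
  { unfold X. rewrite Nat.mul_assoc, H4. ring. }
  assert (R : B m1 (S z) * B (S t') z * (S m1 * S (S t')) =
              X * (Bs t' z + 2 * B t' z + B t' (S z))).
  { unfold X. 
    replace (B m1 (S z) * B (S t') z * (S m1 * S (S t'))) with
      ((S m1 * B m1 (S z)) * (S (S t') * B (S t') z)) by ring.
    rewrite H1, <- H2. ring. }
  rewrite R.
  replace (B (S m1) z * Bs t' z * ((S m1 - z) * (S m1 - S z))) with
    ((B (S m1) z * ((S m1 - z) * (S m1 - S z))) * Bs t' z) by ring.
  replace (B (S m1) (S (S z)) * B t' (S z) * (S (S z) * S z)) with
    ((B (S m1) (S (S z)) * (S (S z) * S z)) * B t' (S z)) by ring.
  rewrite T1, T3. unfold X. ring.
Qed.

Lemma cross_id : forall q d,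
  B (q + d) q * ff (2*q + d + 1) (q + 1) = ff (q + d + 1) (q + 1) * B (2*q + d + 1) (q + d + 1).
Proof.
  intros q d.
  pose proof (B_fact (q+d) q ltac:(lia)) as F1. replace (q + d - q) with d in F1 by lia.
  pose proof (ff_fact (2*q+d+1) (q+1) ltac:(lia)) as F2. replace (2*q+d+1 - (q+1)) with (q+d) in F2 by lia.
  pose proof (ff_fact (q+d+1) (q+1) ltac:(lia)) as F3. replace (q+d+1 - (q+1)) with d in F3 by lia.
  pose proof (B_fact (2*q+d+1) (q+d+1) ltac:(lia)) as F4. replace (2*q+d+1 - (q+d+1)) with q in F4 by lia.
  pose proof (lt_O_fact q). pose proof (lt_O_fact d). pose proof (lt_O_fact (q+d)).
  apply (Nat.mul_cancel_r _ _ (fact q * fact d * fact (q + d))); [nia|].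
  transitivity ((B (q + d) q * fact q * fact d) * (ff (2 * q + d + 1) (q + 1) * fact (q + d))); [ring|].
  rewrite F1, F2.
  transitivity ((B (2 * q + d + 1) (q + d + 1) * (ff (q + d + 1) (q + 1) * fact d) * fact q) * fact (q + d)); [|ring].
  rewrite F3, F4. ring.
Qed.

Lemma ff_step : forall a k, ff (a - 1) (S k) * a = ff a k * ((a - k) * (a - S k)).
Proof.
  intros a k. pose proof (ff_S' a (S k)) as H. simpl ff in H |- *.
  rewrite Nat.mul_comm. rewrite <- H. ring.
Qed.

Lemma ff_pos : forall a k, k <= a -> 0 < ff a k.
Proof.
  intros a k H. pose proof (ff_fact a k H). pose proof (lt_O_fact a).
  destruct (ff a k); simpl in *; lia.
Qed.
Open Scope R_scope.

Definition D (n t x : nat) : R := INR (B (n - t) x * Bs (t - 1) x) / INR (B (n - 1) t).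

Lemma B_pos : forall n k, (k <= n)%nat -> (0 < B n k)%nat.
Proof.
  intros n k H. pose proof (B_fact n k H). pose proof (lt_O_fact n).
  destruct (B n k); simpl in *; lia.
Qed.

Lemma D_step_pt : forall n t' z, (2 <= n)%nat -> (S (S t') <= n - 1)%nat ->
  D n (S t') z * wBB (n - S t') z + D n (S t') (S z) * wBR (n - S t') (S z)
  + D n (S t') (S (S z)) * wRR (n - S t') (S (S z)) = D n (S (S t')) (S z).
Proof.
  intros n t' z Hn Ht.
  set (m := (n - S t')%nat).
  assert (Hm : (2 <= m)%nat) by lia.
  assert (Hmn : (m = n - S t')%nat) by reflexivity. clearbody m.
  pose proof (Nid m t' z Hm) as HN.
  pose proof (B_abs2 (n-1) (S t')) as HK.
  replace (n - 1 - S t')%nat with (m - 1)%nat in HK by lia.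
  apply (f_equal INR) in HK. rewrite !mult_INR in HK.
  apply (f_equal INR) in HN. rewrite !plus_INR, !mult_INR in HN.
  unfold D, wBB, wBR, wRR, choose2.
  replace (n - S (S t'))%nat with (m - 1)%nat by lia.
  rewrite <- Hmn. replace (S (S t') - 1)%nat with (S t') by lia.
  replace (S t' - 1)%nat with t' by lia.
  change (Bs t' (S z)) with (B t' z). change (Bs t' (S (S z))) with (B t' (S z)).
  change (Bs (S t') (S z)) with (B (S t') z).
  rewrite !mult_INR.
  assert (K0 : INR (B (n-1) (S t')) <> 0) by (apply not_0_INR; pose proof (B_pos (n-1) (S t')); lia).
  assert (K1 : INR (B (n-1) (S (S t'))) <> 0) by (apply not_0_INR; pose proof (B_pos (n-1) (S (S t'))); lia).
  assert (M0 : INR m <> 0) by (apply not_0_INR; lia).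
  assert (M1 : INR (m - 1) <> 0) by (apply not_0_INR; lia).
  assert (T0 : INR (S (S t')) <> 0) by (apply not_0_INR; lia).
  assert (HK' : INR (B (n - 1) (S (S t'))) = INR (B (n - 1) (S t')) * INR (m - 1) / INR (S (S t'))).
  { rewrite <- HK. field. auto. }
  rewrite HK'.
  apply (Rmult_eq_reg_r (INR (B (n-1) (S t')) * INR m * INR (m - 1))).
  2:{ repeat apply Rmult_integral_contrapositive_currified; auto. }
  replace (INR 2) with 2 in HN by (simpl; lra).
  match type of HN with ?L = ?R => transitivity L; [field; auto| rewrite HN; field; auto] end.
Qed.

Lemma sum_single : forall f a N, (a <= N)%nat -> (forall x, x <> a -> f x = 0) ->
  sum_f_R0 f N = f a.
Proof.
  intros f a N. induction N; intros H1 H2.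
  - simpl. replace a with 0%nat by lia. auto.
  - simpl. destruct (Nat.eq_dec a (S N)) as [e|e].
    + subst a. rewrite (sum_eq_R0 f N). ring. intros x Hx; apply H2; lia.
    + rewrite IHN by (auto; lia). rewrite (H2 (S N)) by lia. ring.
Qed.

Definition shiftR (a : nat -> R) (y : nat) : R := match y with O => 0 | S y' => a y' end.

Lemma sum_up_aux : forall a G N,
  sum_f_R0 (fun y => shiftR a y * G y) (S N) = sum_f_R0 (fun x => a x * G (S x)) N.
Proof.
  intros a G N. induction N.
  - simpl. ring.
  - change (sum_f_R0 (fun y => shiftR a y * G y) (S (S N))) with
      (sum_f_R0 (fun y => shiftR a y * G y) (S N) + shiftR a (S (S N)) * G (S (S N))).
    rewrite IHN. simpl. ring.
Qed.

Lemma sum_up : forall a G N, a N = 0 ->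
  sum_f_R0 (fun x => a x * G (S x)) N = sum_f_R0 (fun y => shiftR a y * G y) N.
Proof.
  intros a G N H. destruct N.
  - simpl. rewrite H. ring.
  - rewrite <- sum_up_aux. simpl. rewrite H. ring.
Qed.

Lemma sum_down_aux : forall c G N,
  sum_f_R0 (fun x => c x * G (pred x)) (S N) = c 0%nat * G 0%nat + sum_f_R0 (fun y => c (S y) * G y) N.
Proof.
  intros c G N. induction N.
  - simpl. ring.
  - change (sum_f_R0 (fun x => c x * G (pred x)) (S (S N))) with
      (sum_f_R0 (fun x => c x * G (pred x)) (S N) + c (S (S N)) * G (pred (S (S N)))).
    rewrite IHN. simpl. ring.
Qed.

Lemma sum_down : forall c G N, c 0%nat = 0 -> c (S N) = 0 ->
  sum_f_R0 (fun x => c x * G (pred x)) N = sum_f_R0 (fun y => c (S y) * G y) N.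
Proof.
  intros c G N H0 H1. destruct N.
  - simpl. rewrite H0, H1. ring.
  - rewrite sum_down_aux, H0. simpl. rewrite H1. ring.
Qed.

Lemma D_zero_hi : forall n t x, (1 <= n)%nat -> (1 <= t)%nat -> (n <= x)%nat -> D n t x = 0.
Proof.
  intros n t x H0 H1 H2. unfold D. rewrite B_gt by lia. simpl. unfold Rdiv. ring.
Qed.

Lemma D_zero_0 : forall n t, D n t 0 = 0.
Proof. intros. unfold D. simpl. rewrite Nat.mul_0_r. simpl. unfold Rdiv. ring. Qed.

Lemma D_step_all : forall n t' y, (2 <= n)%nat -> (S (S t') <= n - 1)%nat ->
  shiftR (fun x => D n (S t') x * wBB (n - S t') x) y + D n (S t') y * wBR (n - S t') y
  + D n (S t') (S y) * wRR (n - S t') (S y) = D n (S (S t')) y.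
Proof.
  intros n t' y H1 H2. destruct y.
  - simpl. rewrite !D_zero_0. unfold wRR. rewrite (choose2_small 1) by lia. unfold Rdiv. ring.
  - simpl shiftR. apply D_step_pt; auto.
Qed.

Lemma dist : forall n t G, (2 <= n)%nat -> (1 <= t)%nat -> (t <= n - 1)%nat ->
  Vs t n 0 G = sum_f_R0 (fun x => D n t x * G x) n.
Proof.
  intros n t G Hn. revert G. induction t; intros G H1 H2; [lia|].
  destruct t.
  -
    simpl. unfold wBB, wBR, wRR. rewrite Nat.sub_0_r, Nat.mul_0_r.
    rewrite (choose2_small 0) by lia.
    assert (Hc := choose2_pos n Hn).
    rewrite (sum_single _ 1%nat) by (try lia; intros x Hx; unfold D; destruct x as [|[|x]]; simpl; try lia;
        rewrite ?Nat.mul_0_r; simpl; unfold Rdiv; ring).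
    unfold D. simpl Bs. rewrite Nat.mul_1_r.
    assert (HB : INR (B (n - 1) 1) <> 0) by (apply not_0_INR; pose proof (B_pos (n-1) 1); lia).
    simpl INR. field. split; lra.
  - rewrite Vs_last. rewrite IHt by lia.
    set (m := (n - S t)%nat).
    transitivity (sum_f_R0 (fun x => (D n (S t) x * wBB m x) * G (S x)) n +
                  (sum_f_R0 (fun x => (D n (S t) x * wBR m x) * G x) n +
                   sum_f_R0 (fun x => (D n (S t) x * wRR m x) * G (pred x)) n)).
    { rewrite <- !sum_plus. apply sum_eq. intros i _. unfold step. ring. }
    rewrite sum_up by (apply Rmult_eq_0_compat_r; apply D_zero_hi; lia).
    rewrite (sum_down (fun x => D n (S t) x * wRR m x)) by
      (apply Rmult_eq_0_compat_r; first [apply D_zero_0 | apply D_zero_hi; lia]).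
    rewrite <- !sum_plus. apply sum_eq. intros i _.
    rewrite <- (D_step_all n t i) by lia. fold m. ring.
Qed.

Definition prodR (f : nat -> R) (k : nat) : R := fold_right Rmult 1 (map f (seq 0 k)).

Lemma fold_mult_init : forall l x, fold_right Rmult x l = fold_right Rmult 1 l * x.
Proof. induction l; intros x; simpl; [ring| rewrite IHl; ring]. Qed.

Lemma prodR_S : forall f k, prodR f (S k) = prodR f k * f k.
Proof.
  intros f k. unfold prodR. rewrite seq_S, map_app, fold_right_app. simpl.
  rewrite fold_mult_init. ring.
Qed.

Lemma prodR_zero : forall f k i, (i < k)%nat -> f i = 0 -> prodR f k = 0.
Proof.
  intros f k. induction k; intros i H1 H2; [lia|].
  rewrite prodR_S. destruct (Nat.eq_dec i k) as [->|e].
  - rewrite H2. ring.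
  - rewrite (IHk i) by (auto; lia). ring.
Qed.

Lemma prodR_ratio : forall a b k, prodR (fun i => INR (a - i) / INR (b - i)) k = INR (ff a k) / INR (ff b k).
Proof.
  intros a b k. induction k.
  - unfold prodR. simpl. field.
  - rewrite prodR_S, IHk. simpl ff. rewrite !mult_INR. unfold Rdiv.
    rewrite Rinv_mult. ring.
Qed.


Lemma tail_ff : forall n k, (2 * k <= n)%nat -> tau_tail n k = INR (ff (n - k) k) / INR (ff (n - 1) k).
Proof.
  intros n k H. rewrite <- prodR_ratio. unfold tau_tail. fold (prodR (fun i => IZR (Z.of_nat n - Z.of_nat k - Z.of_nat i) / IZR (Z.of_nat n - 1 - Z.of_nat i)) k).
  unfold prodR. f_equal. apply map_ext_in. intros i Hi. apply in_seq in Hi.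
  rewrite !INR_IZR_INZ. f_equal; f_equal; lia.
Qed.

Lemma tail_small : forall n k, (n < 2 * k)%nat -> (k <= n)%nat -> tau_tail n k = 0.
Proof.
  intros n k H1 H2. unfold tau_tail.
  fold (prodR (fun i => IZR (Z.of_nat n - Z.of_nat k - Z.of_nat i) / IZR (Z.of_nat n - 1 - Z.of_nat i)) k).
  apply (prodR_zero _ _ (n - k)); [lia|].
  replace (Z.of_nat n - Z.of_nat k - Z.of_nat (n - k))%Z with 0%Z by lia. unfold Rdiv; ring.
Qed.

Lemma INR_pred : forall x, (1 <= x)%nat -> INR (x - 1) = INR x - 1.
Proof. intros x H. rewrite minus_INR by lia. simpl. ring. Qed.

Lemma Qp_S : forall t m r, Qp (S t) m r = Qp t m r * wBB (m - t) (r + t).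
Proof.
  induction t; intros m r.
  - simpl. rewrite Nat.sub_0_r, Nat.add_0_r. ring.
  - change (Qp (S (S t)) m r) with (wBB m r * Qp (S t) (m-1) (S r)).
    rewrite IHt. simpl. replace (m - 1 - t)%nat with (m - S t)%nat by lia.
    replace (S (r + t)) with (r + S t)%nat by lia. ring.
Qed.

Lemma Qp_ff : forall n k, (2 * k <= n)%nat -> Qp k n 0 = INR (ff (n - k) k) / INR (ff (n - 1) k).
Proof.
  intros n k. induction k; intros H.
  - simpl. field.
  - rewrite Qp_S, IHk by lia. simpl (0 + k)%nat.
    unfold wBB. rewrite !choose2_eq.
    pose proof (ff_step (n - k) k) as E. replace (n - k - 1)%nat with (n - S k)%nat in E by lia.
    apply (f_equal INR) in E. rewrite !mult_INR in E.
    change (ff (n - 1) (S k)) with (ff (n - 1) k * (n - 1 - k))%nat. rewrite mult_INR.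
    assert (F0 : INR (ff (n-1) k) <> 0) by (apply not_0_INR; pose proof (ff_pos (n-1) k); lia).
    assert (A0 : INR (n - k) <> 0) by (apply not_0_INR; lia).
    assert (A1 : INR (n - 1 - k) <> 0) by (apply not_0_INR; lia).
    assert (X1 : INR (n - k) - 1 = INR (n - 1 - k)) by (replace (n - 1 - k)%nat with (n - k - 1)%nat by lia; rewrite INR_pred by lia; ring).
    assert (X2 : INR (n - k - k) = INR (n - k - k)) by reflexivity.
    assert (X3 : INR (n - k - k) - 1 = INR (n - k - S k)) by (replace (n - k - S k)%nat with (n - k - k - 1)%nat by lia; rewrite INR_pred by lia; ring).
    rewrite X1, X3.
    apply (Rmult_eq_reg_r (INR (n - k))); auto.
    replace (INR (ff (n - S k) (S k)) / (INR (ff (n - 1) k) * INR (n - 1 - k)) * INR (n - k))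
      with (INR (ff (n - S k) (S k)) * INR (n - k) / (INR (ff (n - 1) k) * INR (n - 1 - k))) by (field; auto).
    rewrite E. field. auto.
Qed.

Lemma Qp_small : forall n k, (n < 2 * k)%nat -> (1 <= k)%nat -> Qp k n 0 = 0.
Proof.
  intros n k H1 H2. destruct k; [lia|]. rewrite Qp_S. simpl (0 + k)%nat.
  unfold wBB. rewrite (choose2_small (n - k - k)) by lia. unfold Rdiv. ring.
Qed.

Theorem probA : forall n k, (1 <= k)%nat -> (k <= n - 1)%nat ->
  Vs k n 0 (ind k) = tau_tail n k.
Proof.
  intros n k H1 H2. change (ind k) with (ind (0 + k)). rewrite Vs_ind_top.
  destruct (le_lt_dec (2 * k) n).
  - rewrite Qp_ff, tail_ff by lia. reflexivity.
  - rewrite Qp_small, tail_small by lia. reflexivity.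
Qed.

Theorem probB : forall n k, (2 <= n)%nat -> (1 <= k)%nat -> (k <= n - 1)%nat ->
  Vs (n - k) n 0 (ind k) = tau_tail n k.
Proof.
  intros n k Hn H1 H2. rewrite dist by lia.
  rewrite (sum_single _ k).
  2:{ lia. }
  2:{ intros x Hx. unfold ind. destruct (Nat.eqb_spec x k); [lia|ring]. }
  unfold ind. rewrite Nat.eqb_refl, Rmult_1_r. unfold D.
  replace (n - (n - k))%nat with k by lia. rewrite B_nn, Nat.mul_1_l.
  destruct k as [|q]; [lia|]. simpl Bs.
  destruct (le_lt_dec (2 * S q) n).
  - rewrite tail_ff by lia.
    set (d := (n - 2 * S q)%nat).
    assert (En : n = (2 * q + d + 2)%nat) by (unfold d; lia). clearbody d. subst n.
    replace (2 * q + d + 2 - S q - 1)%nat with (q + d)%nat by lia.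
    replace (2 * q + d + 2 - 1)%nat with (2 * q + d + 1)%nat by lia.
    replace (2 * q + d + 2 - S q)%nat with (q + d + 1)%nat by lia.
    replace (S q) with (q + 1)%nat by lia.
    pose proof (cross_id q d) as C. apply (f_equal INR) in C. rewrite !mult_INR in C.
    assert (F0 : INR (ff (2*q+d+1) (q+1)) <> 0) by (apply not_0_INR; pose proof (ff_pos (2*q+d+1) (q+1)); lia).
    assert (F1 : INR (B (2*q+d+1) (q+d+1)) <> 0) by (apply not_0_INR; pose proof (B_pos (2*q+d+1) (q+d+1)); lia).
    apply (Rmult_eq_reg_r (INR (ff (2*q+d+1) (q+1)) * INR (B (2*q+d+1) (q+d+1)))).
    2:{ apply Rmult_integral_contrapositive_currified; auto. }
    field_simplify; auto. rewrite C. ring.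
  - rewrite tail_small by lia. rewrite B_gt by lia. simpl. unfold Rdiv; ring.
Qed.
Open Scope nat_scope.

Lemma adm_props : forall s m r, adm m r s -> (r <= m)%nat ->
  forall i, (S i <= length s)%nat ->
  (nth (S i) (r :: s) 0 <= nth i (r :: s) 0 + 1 /\ nth i (r :: s) 0 <= nth (S i) (r :: s) 0 + 1 /\
   nth i (r :: s) 0 <= m - i /\ nth (S i) (r :: s) 0 <= m - S i)%nat.
Proof.
  induction s as [|x s IH]; intros m r Ha Hr i Hi; simpl in Hi; [lia|].
  destruct Ha as [Ht Ha].
  assert (Hx : (x <= m - 1 /\ x <= r + 1 /\ r <= x + 1)%nat).
  { destruct Ht as [[-> Hw]|[[-> Hw]|[-> Hw]]].
    - apply wBB_nz in Hw. lia.
    - apply wBR_nz in Hw. lia.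
    - apply wRR_nz in Hw. lia. }
  destruct i.
  - simpl. lia.
  - change (nth (S (S i)) (r :: x :: s) 0) with (nth (S i) (x :: s) 0).
    change (nth (S i) (r :: x :: s) 0) with (nth i (x :: s) 0).
    destruct (IH (m - 1)%nat x Ha ltac:(lia) i ltac:(lia)) as [A1 [A2 [A3 A4]]].
    lia.
Qed.

Section Path.
Variable n : nat.
Variable s : list nat.
Hypothesis Hn : (2 <= n)%nat.
Hypothesis Hl : length s = (n - 1)%nat.
Hypothesis Ha : adm n 0 s.

Definition u (i : nat) : nat := nth i (0%nat :: s) 0%nat.

Lemma u_step : forall i, (S i <= n - 1)%nat ->
  (u (S i) <= u i + 1 /\ u i <= u (S i) + 1 /\ u i <= n - i /\ u (S i) <= n - S i)%nat.
Proof. intros i H. apply (adm_props s n 0); auto; lia. Qed.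

Lemma u_0 : u 0 = 0%nat.
Proof. reflexivity. Qed.

Lemma u_le_i : forall i, (i <= n - 1)%nat -> (u i <= i)%nat.
Proof.
  induction i; intros H.
  - rewrite u_0; lia.
  - pose proof (u_step i H). specialize (IHi ltac:(lia)). lia.
Qed.

Lemma u_le_m : forall i, (i <= n - 1)%nat -> (u i <= n - i)%nat.
Proof.
  intros i H. destruct i.
  - rewrite u_0; lia.
  - pose proof (u_step i H). lia.
Qed.

Lemma u_grow : forall k j, (k <= j)%nat -> (j <= n - 1)%nat -> (u j <= u k + (j - k))%nat.
Proof.
  intros k j H1. induction j; intros H2.
  - replace k with 0%nat by lia. lia.
  - destruct (Nat.eq_dec k (S j)) as [->|e]; [lia|].
    pose proof (u_step j H2). specialize (IHj ltac:(lia) ltac:(lia)). lia.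
Qed.

Lemma black_mono : forall k j, (k <= j)%nat -> (j <= n - 1)%nat ->
  (n - j - u j <= n - k - u k)%nat.
Proof.
  intros k j H1. induction j; intros H2.
  - replace k with 0%nat by lia. lia.
  - destruct (Nat.eq_dec k (S j)) as [->|e]; [lia|].
    pose proof (u_step j H2). specialize (IHj ltac:(lia) ltac:(lia)). lia.
Qed.

Definition UU := (0%nat :: s ++ [0%nat]).

Lemma U_at_lt : forall i, (i < n)%nat -> U_at UU i = u i.
Proof.
  intros i H. unfold U_at, UU, u. rewrite app_comm_cons. apply app_nth1. simpl. lia.
Qed.

Lemma U_at_n : U_at UU n = 0%nat.
Proof.
  unfold U_at, UU. rewrite app_comm_cons. rewrite app_nth2 by (simpl; lia).
  simpl length. replace (n - S (length s))%nat with 0%nat by lia. reflexivity.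
Qed.

End Path.
Open Scope R_scope.
Open Scope nat_scope.

Section Fold.
Variable P : nat -> bool.
Definition Fm (acc k : nat) : nat := if P k then k else acc.

Lemma FL1 : forall len a acc, acc <= a -> acc <= fold_left Fm (seq a len) acc.
Proof.
  induction len; intros a acc H; simpl; [lia|].
  unfold Fm at 2. destruct (P a); eapply Nat.le_trans; [|apply IHlen; lia| |apply IHlen; lia]; lia.
Qed.

Lemma FL2 : forall len a acc k, a <= k < a + len -> P k = true -> acc <= a ->
  k <= fold_left Fm (seq a len) acc.
Proof.
  induction len; intros a acc k H1 H2 H3; [lia|]. simpl.
  destruct (Nat.eq_dec k a) as [->|e].
  - replace a with (Fm acc a) at 1 by (unfold Fm; rewrite H2; auto). apply FL1. unfold Fm. rewrite H2. lia.
  - apply IHlen; [lia|auto|]. unfold Fm. destruct (P a); lia.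
Qed.

Lemma FL3 : forall len a acc, let r := fold_left Fm (seq a len) acc in
  r = acc \/ (P r = true /\ a <= r < a + len).
Proof.
  induction len; intros a acc r; [left; reflexivity|].
  unfold r; simpl. destruct (IHlen (S a) (Fm acc a)) as [E|[E1 E2]].
  - rewrite E. unfold Fm. destruct (P a) eqn:Ep; [right; split; auto; lia| left; auto].
  - right. split; auto. lia.
Qed.
End Fold.

Lemma tau_is : forall n U, tau n U = fold_left (Fm (fun k => Nat.eqb (U_at U (n - k)) k)) (seq 1 n) 0.
Proof. reflexivity. Qed.
Lemma tau'_is : forall n U, tau' n U = fold_left (Fm (fun k => Nat.eqb (U_at U k) k)) (seq 1 n) 0.
Proof. reflexivity. Qed.

Section Path2.
Variable n : nat.
Variable s : list nat.
Hypothesis Hn : (2 <= n)%nat.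
Hypothesis Hl : length s = (n - 1)%nat.
Hypothesis Ha : adm n 0 s.

Lemma tau_range : tau n (UU s) = 0 \/ (1 <= tau n (UU s) <= n - 1 /\ U_at (UU s) (n - tau n (UU s)) = tau n (UU s)).
Proof.
  rewrite tau_is. destruct (FL3 (fun k => Nat.eqb (U_at (UU s) (n - k)) k) n 1 0) as [E|[E1 E2]].
  - left; exact E.
  - right. apply Nat.eqb_eq in E1. set (j := fold_left _ _ _) in *.
    split; auto. split; [lia|].
    destruct (Nat.eq_dec j n) as [e|e]; [|lia].
    rewrite e in E1. rewrite Nat.sub_diag in E1. unfold U_at, UU in E1. simpl in E1. lia.
Qed.

Lemma tau'_range : tau' n (UU s) = 0 \/ (1 <= tau' n (UU s) <= n - 1 /\ U_at (UU s) (tau' n (UU s)) = tau' n (UU s)).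
Proof.
  rewrite tau'_is. destruct (FL3 (fun k => Nat.eqb (U_at (UU s) k) k) n 1 0) as [E|[E1 E2]].
  - left; exact E.
  - right. apply Nat.eqb_eq in E1. set (j := fold_left _ _ _) in *.
    split; auto. split; [lia|].
    destruct (Nat.eq_dec j n) as [e|e]; [|lia].
    rewrite e in E1. rewrite (U_at_n n s) in E1 by lia. lia.
Qed.

Lemma tau_char : forall k, 1 <= k <= n - 1 ->
  Nat.leb k (tau n (UU s)) = Nat.eqb (u s (n - k)) k.
Proof.
  intros k Hk. destruct (Nat.eqb_spec (u s (n - k)) k) as [E|E].
  - apply Nat.leb_le. rewrite tau_is. apply FL2; [lia| |lia].
    apply Nat.eqb_eq. rewrite (U_at_lt n s) by lia. exact E.
  - apply Nat.leb_gt. destruct tau_range as [Z|[R1 R2]]; [lia|].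
    set (j := tau n (UU s)) in *.
    destruct (le_lt_dec k j) as [h|h]; [|lia]. exfalso. apply E.
    rewrite (U_at_lt n s) in R2 by lia.
    pose proof (black_mono n s Hn Hl Ha (n - j) (n - k) ltac:(lia) ltac:(lia)).
    pose proof (u_le_m n s Hn Hl Ha (n - k) ltac:(lia)). lia.
Qed.

Lemma tau'_char : forall k, 1 <= k <= n - 1 ->
  Nat.leb k (tau' n (UU s)) = Nat.eqb (u s k) k.
Proof.
  intros k Hk. destruct (Nat.eqb_spec (u s k) k) as [E|E].
  - apply Nat.leb_le. rewrite tau'_is. apply FL2; [lia| |lia].
    apply Nat.eqb_eq. rewrite (U_at_lt n s) by lia. exact E.
  - apply Nat.leb_gt. destruct tau'_range as [Z|[R1 R2]]; [lia|].
    set (j := tau' n (UU s)) in *.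
    destruct (le_lt_dec k j) as [h|h]; [|lia]. exfalso. apply E.
    rewrite (U_at_lt n s) in R2 by lia.
    pose proof (u_grow n s Hn Hl Ha k j ltac:(lia) ltac:(lia)).
    pose proof (u_le_i n s Hn Hl Ha k ltac:(lia)). lia.
Qed.

Lemma tau_big : forall k, n <= k -> Nat.leb k (tau n (UU s)) = false.
Proof. intros k H. apply Nat.leb_gt. destruct tau_range; lia. Qed.
Lemma tau'_big : forall k, n <= k -> Nat.leb k (tau' n (UU s)) = false.
Proof. intros k H. apply Nat.leb_gt. destruct tau'_range; lia. Qed.

End Path2.
Open Scope R_scope.

Lemma urnP_ext : forall n A1 A2, (2 <= n)%nat ->
  (forall s, length s = (n - 1)%nat -> adm n 0 s -> A1 (UU s) = A2 (UU s)) ->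
  urnP n A1 = urnP n A2.
Proof.
  intros n A1 A2 Hn H. unfold urnP, urnE. apply pathE_ext. intros s Hl Ha.
  change (0%nat :: s ++ [0%nat]) with (UU s). rewrite H; auto.
Qed.

Theorem part2 : forall n k, (2 <= n)%nat -> (1 <= k)%nat -> (k <= n - 1)%nat ->
  urnP n (fun U => Nat.leb k (tau n U)) = tau_tail n k.
Proof.
  intros n k Hn H1 H2. unfold urnP, urnE.
  rewrite (pathE_ext _ _ _ _ (fun s => ind k (nth (n - k) (0%nat :: s) 0%nat))).
  2:{ intros s Hl Ha. change (0%nat :: s ++ [0%nat]) with (UU s).
      rewrite (tau_char n s) by (auto; lia). unfold ind, u. destruct (Nat.eqb _ _); reflexivity. }
  rewrite (pathE_Vs (n - k) (n - 1)) by lia. apply probB; auto.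
Qed.

Theorem part2' : forall n k, (2 <= n)%nat -> (1 <= k)%nat -> (k <= n - 1)%nat ->
  urnP n (fun U => Nat.leb k (tau' n U)) = tau_tail n k.
Proof.
  intros n k Hn H1 H2. unfold urnP, urnE.
  rewrite (pathE_ext _ _ _ _ (fun s => ind k (nth k (0%nat :: s) 0%nat))).
  2:{ intros s Hl Ha. change (0%nat :: s ++ [0%nat]) with (UU s).
      rewrite (tau'_char n s) by (auto; lia). unfold ind, u. destruct (Nat.eqb _ _); reflexivity. }
  rewrite (pathE_Vs k (n - 1)) by lia. apply probA; auto.
Qed.

Lemma tails_eq : forall n k, (2 <= n)%nat ->
  urnP n (fun U => Nat.leb k (tau n U)) = urnP n (fun U => Nat.leb k (tau' n U)).
Proof.
  intros n k Hn. destruct k.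
  - apply urnP_ext; auto.
  - destruct (le_lt_dec (S k) (n - 1)).
    + rewrite part2, part2'; auto; lia.
    + transitivity (urnP n (fun _ => false)).
      * apply urnP_ext; auto. intros s Hl Ha. apply tau_big; auto; lia.
      * symmetry. apply urnP_ext; auto. intros s Hl Ha. apply tau'_big; auto; lia.
Qed.

Lemma eq_split : forall X j : nat,
  (if Nat.eqb X j then 1 else 0) = (if Nat.leb j X then 1 else 0) - (if Nat.leb (S j) X then 1 else 0).
Proof.
  intros X j. destruct (Nat.eqb_spec X j); destruct (Nat.leb_spec j X); destruct (Nat.leb_spec (S j) X);
  try lia; ring.
Qed.

Theorem part1 : forall n, (2 <= n)%nat -> forall j,
  urnP n (fun U => Nat.eqb (tau n U) j) = urnP n (fun U => Nat.eqb (tau' n U) j).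
Proof.
  intros n Hn j.
  assert (E : forall Y : list nat -> nat, urnP n (fun U => Nat.eqb (Y U) j) =
     urnP n (fun U => Nat.leb j (Y U)) - urnP n (fun U => Nat.leb (S j) (Y U))).
  { intros Y. unfold urnP, urnE. rewrite <- pathE_minus. apply pathE_ext. intros s _ _. apply eq_split. }
  rewrite !E, !tails_eq by auto. reflexivity.
Qed.

Lemma exp_le : forall x y, x <= y -> exp x <= exp y.
Proof. intros x y [H|H]; [left; apply exp_increasing; auto| rewrite H; lra]. Qed.

Lemma exp_lower : forall x, 0 <= x <= 1/2 -> exp (- (x + 2 * x ^ 2)) <= 1 - x.
Proof.
  intros x Hx. remember (x + 2 * x ^ 2) as y eqn:Hyd.
  assert (Hy : 0 <= y) by (subst y; nra).
  assert (E : exp y = exp (y/2) * exp (y/2)) by (rewrite <- exp_plus; f_equal; field).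
  assert (E2 : 1 + y/2 <= exp (y/2)) by apply exp_ineq1_le.
  assert (E3 : (1 + y/2) * (1 + y/2) <= exp y) by (rewrite E; apply Rmult_le_compat; lra).
  assert (E4 : 1 <= (1 - x) * exp y).
  { apply Rle_trans with ((1 - x) * ((1 + y/2) * (1 + y/2))).
    - assert (P : (1 - x) * ((1 + y/2) * (1 + y/2)) - 1 = x^2 * (5/4 - 5/4 * x - x^3)) by (subst y; field).
      assert (x^3 <= 1/8) by (replace (x^3) with (x*x*x) by ring; assert (x*x <= 1/4) by nra; nra).
      assert (0 <= x^2) by nra. nra.
    - apply Rmult_le_compat_l; lra. }
  rewrite exp_Ropp. assert (0 < exp y) by apply exp_pos.
  apply (Rmult_le_reg_r (exp y)); auto. rewrite Rinv_l by lra. lra.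
Qed.

Lemma prod_le : forall f a k, 0 <= a -> (forall i, (i < k)%nat -> 0 <= f i <= a) -> 0 <= prodR f k <= a ^ k.
Proof.
  intros f a k Ha. induction k; intros H.
  - unfold prodR. simpl. lra.
  - rewrite prodR_S. simpl pow. destruct (IHk ltac:(intros; apply H; lia)) as [A B].
    destruct (H k ltac:(lia)) as [C D]. split; [nra|].
    rewrite Rmult_comm. apply Rmult_le_compat; auto.
Qed.

Lemma prod_ge : forall f a k, 0 <= a -> (forall i, (i < k)%nat -> a <= f i) -> a ^ k <= prodR f k.
Proof.
  intros f a k Ha. induction k; intros H.
  - unfold prodR. simpl. lra.
  - rewrite prodR_S. simpl pow. rewrite Rmult_comm.
    apply Rmult_le_compat; try (apply pow_le; auto); try (apply IHk; intros; apply H; lia); try (apply H; lia); auto.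
Qed.

Lemma exp_pow : forall c k, exp c ^ k = exp (c * INR k).
Proof.
  intros c k. induction k.
  - simpl. rewrite Rmult_0_r, exp_0. auto.
  - simpl pow. rewrite IHk, S_INR, <- exp_plus. f_equal. ring.
Qed.

Lemma tail_factor : forall n K i, (1 <= K)%nat -> (K <= n - 1)%nat -> (i < K)%nat ->
  IZR (Z.of_nat n - Z.of_nat K - Z.of_nat i) / IZR (Z.of_nat n - 1 - Z.of_nat i)
  = 1 - (INR K - 1) / (INR n - 1 - INR i).
Proof.
  intros n K i H1 H2 H3. rewrite !minus_IZR, <- !INR_IZR_INZ.
  assert (INR i + 1 <= INR K) by (rewrite <- S_INR; apply le_INR; lia).
  assert (INR K + 1 <= INR n) by (rewrite <- S_INR; apply le_INR; lia).
  field. lra.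
Qed.

Theorem tail_bounds : forall n K, (1 <= K)%nat -> (K <= n - 1)%nat ->
  (INR K - 1) / (INR n - INR K) <= 1/2 ->
  exp (- (INR K * ((INR K - 1) / (INR n - INR K) + 2 * ((INR K - 1) / (INR n - INR K)) ^ 2)))
  <= tau_tail n K <= exp (- (INR K * ((INR K - 1) / (INR n - 1)))).
Proof.
  intros n K H1 H2 Hc.
  assert (HK1 : 1 <= INR K) by (apply (le_INR 1); lia).
  assert (HKn : INR K + 1 <= INR n) by (rewrite <- S_INR; apply le_INR; lia).
  set (c := (INR K - 1) / (INR n - 1)).
  set (c' := (INR K - 1) / (INR n - INR K)). assert (Hc2 : c' <= 1/2) by exact Hc.
  assert (Hc0 : 0 <= c) by (unfold c; unfold Rdiv; apply Rmult_le_pos; [lra| left; apply Rinv_0_lt_compat; lra]).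
  assert (Hc0' : 0 <= c') by (unfold c'; unfold Rdiv; apply Rmult_le_pos; [lra| left; apply Rinv_0_lt_compat; lra]).
  unfold tau_tail.
  fold (prodR (fun i => IZR (Z.of_nat n - Z.of_nat K - Z.of_nat i) / IZR (Z.of_nat n - 1 - Z.of_nat i)) K).
  assert (Hx : forall i, (i < K)%nat ->
     c <= (INR K - 1) / (INR n - 1 - INR i) <= c').
  { intros i Hi. assert (INR i + 1 <= INR K) by (rewrite <- S_INR; apply le_INR; lia).
    assert (0 <= INR i) by apply pos_INR.
    unfold c, c'. split; apply Rmult_le_compat_l; try lra; apply Rinv_le_contravar; lra. }
  split.
  - replace (- (INR K * (c' + 2 * c' ^ 2))) with ((- (c' + 2 * c' ^2)) * INR K) by ring.
    rewrite <- exp_pow. apply prod_ge; [left; apply exp_pos|].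
    intros i Hi. rewrite tail_factor by lia. specialize (Hx i Hi).
    set (x := (INR K - 1) / (INR n - 1 - INR i)) in *.
    apply Rle_trans with (exp (- (x + 2 * x ^ 2))).
    + clearbody x. apply exp_le. assert (x^2 <= c'^2) by (apply pow_incr; lra). lra.
    + apply exp_lower; lra.
  - replace (- (INR K * c)) with ((- c) * INR K) by ring.
    rewrite <- exp_pow. apply prod_le; [left; apply exp_pos|].
    intros i Hi. rewrite tail_factor by lia. specialize (Hx i Hi).
    set (x := (INR K - 1) / (INR n - 1 - INR i)) in *.
    split; [lra|]. pose proof (exp_ineq1_le (- c)). lra.
Qed.

Lemma CV_inv' : forall a l, Un_cv a l -> l <> 0 -> Un_cv (fun n => / a n) (/ l).
Proof.
  intros a l H Hl.
  apply (continuity_seq (fun x => / x) a l); auto.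
  apply (continuity_pt_inv id l); auto.
  apply derivable_continuous_pt, derivable_pt_id.
Qed.

Lemma CV_const : forall c, Un_cv (fun _ => c) c.
Proof. intros c eps He. exists 0%nat. intros. unfold Rdist. rewrite Rminus_diag, Rabs_R0. lra. Qed.

Lemma CV_lim_eq : forall a l l', l = l' -> Un_cv a l -> Un_cv a l'.
Proof. intros; subst; auto. Qed.

Lemma CV_exp : forall a l, Un_cv a l -> Un_cv (fun n => exp (a n)) (exp l).
Proof.
  intros a l H. apply (continuity_seq exp); auto.
  apply derivable_continuous_pt, derivable_pt_exp.
Qed.

Lemma CV_ev : forall a b l N, (forall n, (N <= n)%nat -> a n = b n) -> Un_cv a l -> Un_cv b l.
Proof.
  intros a b l N E H eps He. destruct (H eps He) as [M HM]. exists (max N M).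
  intros n Hn. rewrite <- E by lia. apply HM. lia.
Qed.

Lemma CV_squeeze : forall lo a hi l N, (forall n, (N <= n)%nat -> lo n <= a n <= hi n) ->
  Un_cv lo l -> Un_cv hi l -> Un_cv a l.
Proof.
  intros lo a hi l N B H1 H2 eps He.
  destruct (H1 eps He) as [M1 HM1]. destruct (H2 eps He) as [M2 HM2].
  exists (max N (max M1 M2)). intros n Hn.
  specialize (B n ltac:(lia)). specialize (HM1 n ltac:(lia)). specialize (HM2 n ltac:(lia)).
  unfold Rdist in *. apply Rabs_def2 in HM1. apply Rabs_def2 in HM2. apply Rabs_def1; lra.
Qed.

Lemma CV_inv_sqrt : Un_cv (fun n => / sqrt (INR n)) 0.
Proof.
  intros eps He.
  destruct (archimed (/ (eps * eps))) as [A _].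
  exists (Z.to_nat (up (/ (eps * eps)))). intros n Hn. unfold Rdist. rewrite Rminus_0_r.
  assert (P : 0 < / (eps * eps)) by (apply Rinv_0_lt_compat; nra).
  assert (Hn' : / (eps * eps) < INR n).
  { apply Rlt_le_trans with (IZR (up (/ (eps * eps)))); [lra|].
    rewrite INR_IZR_INZ. apply IZR_le.
    assert (0 < up (/ (eps * eps)))%Z by (apply lt_IZR; lra). apply (inj_le _ _) in Hn.
    rewrite Z2Nat.id in Hn by lia. lia. }
  assert (Hn0 : 0 < INR n) by lra.
  assert (Hs : 0 < sqrt (INR n)) by (apply sqrt_lt_R0; auto).
  rewrite Rabs_right by (left; apply Rinv_0_lt_compat; auto).
  assert (Hss : sqrt (INR n) * sqrt (INR n) = INR n) by (apply sqrt_sqrt; lra).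
  assert (/ eps < sqrt (INR n)).
  { destruct (Rlt_or_le (/ eps) (sqrt (INR n))) as [h|h]; auto.
    exfalso. assert (0 < / eps) by (apply Rinv_0_lt_compat; auto).
    assert (sqrt (INR n) * sqrt (INR n) <= / eps * / eps) by (apply Rmult_le_compat; lra).
    rewrite <- Rinv_mult in H0. lra. }
  replace eps with (/ / eps) by (field; lra).
  apply Rinv_lt_contravar; auto. apply Rmult_lt_0_compat; auto. apply Rinv_0_lt_compat; auto.
Qed.

Lemma K_exists : forall x, exists K : nat, 0 <= x -> INR K - 1 < x <= INR K.
Proof.
  intros x. destruct (Rlt_or_le x 0) as [h|h].
  - exists 0%nat. intros; lra.
  - destruct (archimed x) as [A B].
    assert (Z0 : (0 < up x)%Z) by (apply lt_IZR; lra).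
    destruct (Rle_or_lt x (IZR (up x) - 1)) as [h2|h2].
    + exists (Z.to_nat (up x - 1)). intros _. rewrite INR_IZR_INZ, Z2Nat.id by lia.
      rewrite minus_IZR. simpl. lra.
    + exists (Z.to_nat (up x)). intros _. rewrite INR_IZR_INZ, Z2Nat.id by lia. lra.
Qed.

From Stdlib Require Import ClassicalEpsilon.

Definition Kn (t : R) (n : nat) : nat :=
  proj1_sig (constructive_indefinite_description _ (K_exists (t * sqrt (INR n)))).

Lemma Kn_spec : forall t n, 0 <= t * sqrt (INR n) ->
  INR (Kn t n) - 1 < t * sqrt (INR n) <= INR (Kn t n).
Proof.
  intros t n H. unfold Kn. destruct (constructive_indefinite_description _ _) as [K HK]. simpl. auto.
Qed.

Section Limit.
Variable t : R.
Hypothesis Ht : 0 < t.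

Definition sq (n : nat) : R := / sqrt (INR n).
Definition wq (n : nat) : R := INR (Kn t n) * sq n.
Definition Aq (n : nat) : R := wq n * (wq n - sq n) * / (1 - sq n * sq n).
Definition Bq (n : nat) : R := wq n * (wq n - sq n) * / (1 - wq n * sq n)
   + 2 * (wq n * (wq n - sq n) ^ 2 * sq n * (/ (1 - wq n * sq n)) ^ 2).

Lemma sqrt_facts : forall n, (1 <= n)%nat -> 0 < sqrt (INR n) /\ sqrt (INR n) * sqrt (INR n) = INR n.
Proof.
  intros n H. assert (1 <= INR n) by (apply (le_INR 1); lia).
  split; [apply sqrt_lt_R0; lra| apply sqrt_sqrt; lra].
Qed.

Lemma wq_cv : Un_cv wq t.
Proof.
  apply (CV_squeeze (fun _ => t) wq (fun n => t + sq n) t 1).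
  - intros n Hn. destruct (sqrt_facts n Hn) as [Hr Hrr].
    assert (0 <= t * sqrt (INR n)) by nra.
    destruct (Kn_spec t n H) as [A B]. unfold wq, sq.
    assert (0 < / sqrt (INR n)) by (apply Rinv_0_lt_compat; auto).
    split.
    + replace t with (t * sqrt (INR n) * / sqrt (INR n)) at 1 by (field; lra).
      apply Rmult_le_compat_r; lra.
    + replace (t + / sqrt (INR n)) with ((t * sqrt (INR n) + 1) * / sqrt (INR n)) by (field; lra).
      apply Rmult_le_compat_r; lra.
  - apply CV_const.
  - apply (CV_lim_eq _ (t + 0)); [ring|]. apply CV_plus; [apply CV_const| apply CV_inv_sqrt].
Qed.

Lemma Aq_cv : Un_cv Aq (t ^ 2).
Proof.
  unfold Aq. apply (CV_lim_eq _ (t * (t - 0) * / (1 - 0 * 0))); [field|].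
  apply CV_mult; [apply CV_mult; [apply wq_cv| apply CV_minus; [apply wq_cv| apply CV_inv_sqrt]]|].
  apply CV_inv'; [|lra]. apply CV_minus; [apply CV_const|]. apply CV_mult; apply CV_inv_sqrt.
Qed.

Lemma ws_cv : Un_cv (fun n => wq n * sq n) 0.
Proof. apply (CV_lim_eq _ (t * 0)); [ring|]. apply CV_mult; [apply wq_cv| apply CV_inv_sqrt]. Qed.

Lemma Bq_cv : Un_cv Bq (t ^ 2).
Proof.
  unfold Bq.
  assert (I : Un_cv (fun n => / (1 - wq n * sq n)) (/ (1 - 0))).
  { apply CV_inv'; [|lra]. apply CV_minus; [apply CV_const| apply ws_cv]. }
  assert (W : Un_cv (fun n => wq n - sq n) (t - 0)) by (apply CV_minus; [apply wq_cv| apply CV_inv_sqrt]).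
  apply (CV_lim_eq _ (t * (t - 0) * / (1 - 0) + 2 * (t * (t - 0) ^ 2 * 0 * (/ (1 - 0)) ^ 2))); [field|].
  apply CV_plus.
  - apply CV_mult; [apply CV_mult; [apply wq_cv| exact W]| exact I].
  - apply CV_mult; [apply CV_const|].
    apply CV_mult; [apply CV_mult; [apply CV_mult; [apply wq_cv|]| apply CV_inv_sqrt]|].
    + simpl. apply (CV_lim_eq _ ((t - 0) * ((t - 0) * 1))); [ring|].
      apply CV_mult; [exact W| apply CV_mult; [exact W| apply CV_const]].
    + simpl. apply (CV_lim_eq _ (/ (1 - 0) * (/ (1 - 0) * 1))); [ring|].
      apply CV_mult; [exact I| apply CV_mult; [exact I| apply CV_const]].
Qed.

End Limit.

Lemma Rinv_nonneg : forall x, 0 <= x -> 0 <= / x.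
Proof.
  intros x [H|H]; [left; apply Rinv_0_lt_compat; auto| rewrite <- H, Rinv_0; lra].
Qed.

Lemma event_eq : forall t n K x, 0 < t -> 0 < sqrt (INR n) ->
  INR K - 1 < t * sqrt (INR n) <= INR K ->
  (if Rle_dec t (INR x / sqrt (INR n)) then true else false) = Nat.leb K x.
Proof.
  intros t n K x Ht Hr [A B].
  destruct (Rle_dec t (INR x / sqrt (INR n))) as [h|h]; destruct (Nat.leb_spec K x) as [h2|h2]; auto.
  - exfalso. assert (t * sqrt (INR n) <= INR x).
    { apply (Rmult_le_compat_r (sqrt (INR n))) in h; [|lra].
      unfold Rdiv in h. rewrite Rmult_assoc, Rinv_l in h by lra. lra. }
    assert (INR K < INR (S x)) by (rewrite S_INR; lra). apply INR_lt in H0. lia.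
  - exfalso. apply h. apply le_INR in h2.
    apply (Rmult_le_reg_r (sqrt (INR n))); auto. unfold Rdiv. rewrite Rmult_assoc, Rinv_l by lra. lra.
Qed.

Theorem part3 : forall t : R, 0 <= t ->
  Un_cv (fun n : nat => urnP n (fun U => if Rle_dec t (INR (tau n U) / sqrt (INR n)) then true else false))
        (exp (- t ^ 2)).
Proof.
  intros t [Ht|Ht].
  - destruct (ws_cv t Ht (1/3) ltac:(lra)) as [N1 HN1].
    apply (CV_squeeze (fun n => exp (- Bq t n)) _ (fun n => exp (- Aq t n)) _ (max 2 N1)).
    + intros n Hn. specialize (HN1 n ltac:(lia)). unfold Rdist in HN1. rewrite Rminus_0_r in HN1.
      apply Rabs_def2 in HN1.
      destruct (sqrt_facts n ltac:(lia)) as [Hr Hrr].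
      assert (Hsp : 0 <= t * sqrt (INR n)) by nra.
      pose proof (Kn_spec t n Hsp) as HK.
      set (K := Kn t n) in *.
      set (r := sqrt (INR n)) in *.
      assert (Hn2 : 2 <= INR n) by (apply (le_INR 2); lia).
      assert (E1 : wq t n * sq n = INR K / INR n).
      { unfold wq, sq. fold K r. rewrite <- Hrr. field. lra. }
      rewrite E1 in HN1.
      assert (H3K : 3 * INR K < INR n).
      { destruct HN1 as [HN1 _]. apply (Rmult_lt_compat_r (INR n)) in HN1; [|lra].
        unfold Rdiv in HN1. rewrite Rmult_assoc, Rinv_l in HN1 by lra. lra. }
      assert (HK1 : (1 <= K)%nat).
      { assert (0 < t * r) by (apply Rmult_lt_0_compat; auto).
        destruct (Nat.eq_dec K 0) as [e|e]; [rewrite e in HK; simpl in HK; lra| lia]. }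
      assert (HKn : (K <= n - 1)%nat).
      { assert (INR K < INR n) by lra. apply INR_lt in H. lia. }
      assert (HK1r : 1 <= INR K) by (apply (le_INR 1); auto).
      rewrite (urnP_ext n _ (fun U => Nat.leb K (tau n U))).
      2: lia.
      2:{ intros s _ _. apply (event_eq t n K); auto. }
      rewrite part2 by lia.
      assert (Hc : (INR K - 1) / (INR n - INR K) <= 1/2).
      { apply (Rmult_le_reg_r (INR n - INR K)); [lra|]. unfold Rdiv.
        rewrite Rmult_assoc, Rinv_l by lra. lra. }
      destruct (tail_bounds n K HK1 HKn Hc) as [L U].
      assert (EA : Aq t n = INR K * ((INR K - 1) / (INR n - 1))).
      { unfold Aq, wq, sq. fold K r. rewrite <- Hrr. field. split; [|lra]. nra. }
      assert (EB : Bq t n = INR K * ((INR K - 1) / (INR n - INR K) + 2 * ((INR K - 1) / (INR n - INR K)) ^ 2)).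
      { unfold Bq, wq, sq. fold K r. rewrite <- Hrr. rewrite <- Hrr in H3K. field.
        split; [|lra]. nra. }
      rewrite EA, EB. split; auto.
    + apply CV_exp. apply (CV_lim_eq _ (- t^2)); [ring|]. apply CV_opp. apply Bq_cv; auto.
    + apply CV_exp. apply (CV_lim_eq _ (- t^2)); [ring|]. apply CV_opp. apply Aq_cv; auto.
  - subst t. apply (CV_lim_eq _ 1); [rewrite pow_i, Ropp_0, exp_0 by lia; auto|].
    apply (CV_ev (fun _ => 1) _ _ 1); [|apply CV_const].
    intros n Hn. unfold urnP, urnE. rewrite (pathE_ext _ _ _ _ (fun _ => 1)).
    + rewrite pathE_const by lia. auto.
    + intros s _ _. destruct (Rle_dec 0 _) as [h|h]; auto. exfalso. apply h.
      unfold Rdiv. apply Rmult_le_pos; [apply pos_INR| apply Rinv_nonneg, sqrt_pos].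
Qed.

Theorem mainTheorem10 :
  (forall n : nat, (2 <= n)%nat ->
     forall j : nat,
       urnP n (fun U => Nat.eqb (tau n U) j) =
       urnP n (fun U => Nat.eqb (tau' n U) j)) /\
  (forall n k : nat, (2 <= n)%nat -> (1 <= k)%nat -> (k <= n - 1)%nat ->
     urnP n (fun U => Nat.leb k (tau n U)) = tau_tail n k) /\
  (forall t : R, 0 <= t ->
     Un_cv (fun n : nat =>
              urnP n (fun U => if Rle_dec t (INR (tau n U) / sqrt (INR n))
                               then true else false))
           (exp (- t ^ 2))).
Proof.
  split; [exact part1|]. split; [exact part2| exact part3].
Qed.
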